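(* Let $\mathcal{F}\subseteq\mathcal{B}_n$, let $q$ be a positive integer, let $\varepsilon>0$, let $\mathcal{T}$ be a $q$-strong $1$-marked chain family from $\mathcal{F}$, and let $\mathcal{M}=\mathcal{T}[q]$. For $i\in[q]$ and $\chi\in\mathcal{C}$ let $\mathcal{L}^i(\mathcal{M},\chi)$ be the set of $F\in\mathcal{F}$ for which there is $(\chi,Q)\in\mathcal{M}$ such that $F$ is the $i$-th member of $Q$, and let $\mathcal{L}^i(\mathcal{M})=\bigcup_{\chi\in\mathcal{C}}\mathcal{L}^i(\mathcal{M},\chi)$. If $|\mathcal{T}|\geq\varepsilon\, n!$, then for each $i\in[q]$, $$|\mathcal{L}^i(\mathcal{M})|\geq\frac{\varepsilon}{q}\min_{F\in\mathcal{F}}\binom{n}{|F|}.$$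
   Context: $\mathcal{B}_n$ is the family of all subsets of $[n]$. $\mathcal{C}$ is the set of all full chains $\emptyset=C_0\subsetneq C_1\subsetneq\cdots\subsetneq C_n=[n]$ (identified with their sets of members). A $1$-marked chain from $\mathcal{F}$ is a pair $(\chi,F)$ with $\chi\in\mathcal{C}$, $F\in\mathcal{F}\cap\chi$; for a family $\mathcal{T}$ of such pairs, $\mathcal{T}(\chi)=\{F:(\chi,F)\in\mathcal{T}\}$, and $\mathcal{T}$ is $q$-strong if $|\mathcal{T}(\chi)|\ge q$ whenever $\mathcal{T}(\chi)\neq\emptyset$. A $q$-chain is a tuple $(F_1,\dots,F_q)$ with $F_1\supsetneq F_2\supsetneq\cdots\supsetneq F_q$; its $i$-th member is $F_i$. A $q$-marked chain is a pair $(\chi,Q)$ with $\chi\in\mathcal{C}$ and $Q$ a $q$-chain all of whose members lie on $\chi$. The $q$-th power of $\mathcal{T}$ is $\mathcal{T}[q]=\{(\chi,Q): Q \text{ a } q\text{-element subset of }\mathcal{T}(\chi)\}$, where each such $Q$ is viewed as a $q$-chain ordered by decreasing size. *)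

(* Defs.v *)
From HB Require Import structures.
From mathcomp Require Import all_boot all_order all_algebra.
Set Implicit Arguments. Unset Strict Implicit. Unset Printing Implicit Defensive.

(* Subsets of [n] are {set 'I_n}; a chain is identified with its set of members. *)
Notation subsetT n := {set 'I_n}.
Notation chainT n := {set {set 'I_n}}.

Definition full_chain (n : nat) (chi : chainT n) : bool :=
  [exists C : {ffun 'I_n.+1 -> {set 'I_n}},
    [&& C ord0 == set0, C ord_max == setT,
        [forall k : 'I_n, C (widen_ord (leqnSn n) k) \proper C (lift ord0 k)]
      & chi == [set C k | k : 'I_n.+1]]].

Definition marked_family (n : nat) (Fam : {set {set 'I_n}})
  (T : {set (chainT n * {set 'I_n})}) : Prop :=
  forall p, p \in T -> [/\ full_chain p.1, p.2 \in Fam & p.2 \in p.1].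

Definition Tsec (n : nat) (T : {set (chainT n * {set 'I_n})}) (chi : chainT n)
  : {set {set 'I_n}} := [set F | (chi, F) \in T].

Definition q_strong (n q : nat) (T : {set (chainT n * {set 'I_n})}) : Prop :=
  forall chi, Tsec T chi != set0 -> q <= #|Tsec T chi|.

Definition power (n : nat) (T : {set (chainT n * {set 'I_n})}) (q : nat)
  : {set (chainT n * {set {set 'I_n}})} :=
  [set p : chainT n * {set {set 'I_n}} | (p.2 \subset Tsec T p.1) && (#|p.2| == q)].

(* Q viewed as a chain ordered by decreasing size *)
Definition as_chain (n : nat) (Q : {set {set 'I_n}}) : seq {set 'I_n} :=
  sort (fun A B : {set 'I_n} => #|B| <= #|A|) (enum Q).

(* i-th member (1-indexed) *)
Definition ith_member (n : nat) (Q : {set {set 'I_n}}) (i : nat) : {set 'I_n} :=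
  nth set0 (as_chain Q) i.-1.

Definition Lchi (n : nat) (Fam : {set {set 'I_n}})
  (M : {set (chainT n * {set {set 'I_n}})}) (i : nat) (chi : chainT n)
  : {set {set 'I_n}} :=
  [set F in Fam | [exists Q, ((chi, Q) \in M) && (ith_member Q i == F)]].

Definition Lall (n : nat) (Fam : {set {set 'I_n}})
  (M : {set (chainT n * {set {set 'I_n}})}) (i : nat) : {set {set 'I_n}} :=
  \bigcup_(chi : chainT n | full_chain chi) Lchi Fam M i chi.

(* Main.v *)
Require Import Defs.
From HB Require Import structures.
From mathcomp Require Import all_boot all_order all_algebra.
From mathcomp Require Import zify.
Import Order.TTheory GRing.Theory Num.Theory.
Set Implicit Arguments. Unset Strict Implicit. Unset Printing Implicit Defensive.



Definition lowset (n k : nat) : {set 'I_n} := [set j : 'I_n | j < k].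

Lemma card_lowset n k : k <= n -> #|lowset n k| = k.
Proof.
move=> kn.
have -> : lowset n k = [set widen_ord kn j | j : 'I_k].
  apply/setP => x; rewrite inE; apply/idP/imsetP => [xk|[j _ ->]]; last by case: j.
  by exists (Ordinal xk) => //; apply: val_inj.
have inj : injective (widen_ord kn).
  by move=> a b /(congr1 val) /= ab; apply: val_inj.
by rewrite (card_imset _ inj) card_ord.
Qed.

Lemma full_chain_struct n (chi : chainT n) : full_chain chi ->
  exists f : {ffun 'I_n -> 'I_n}, injective f /\
    chi = [set f @: lowset n k | k : 'I_n.+1].
Proof.
case/existsP => C /and4P [/eqP C0 /eqP Cn /forallP Cs /eqP ->].
pose D j := C (inord j).
have D0 : D 0 = set0.
  by rewrite /D -C0; congr (C _); apply: val_inj; rewrite /= inordK.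
have Dn : D n = setT.
  by rewrite /D -Cn; congr (C _); apply: val_inj; rewrite /= inordK.
have Ds : forall k, k < n -> D k \proper D k.+1.
  move=> k kn; have := Cs (Ordinal kn).
  have -> : widen_ord (leqnSn n) (Ordinal kn) = inord k.
    by apply: val_inj; rewrite /= inordK // ltnS ltnW.
  have -> : lift ord0 (Ordinal kn) = inord k.+1.
    by apply: val_inj; rewrite /= inordK.
  by [].
have grow : forall d k, k + d <= n -> #|D k| + d <= #|D (k + d)|.
  elim=> [|d IH] k kd; first by rewrite !addn0.
  have h1 : k + d <= n by lia.
  have h2 : k + d < n by lia.
  have := IH k h1.
  have := proper_card (Ds (k + d) h2).
  rewrite !addnS; lia.
have cardD : forall k, k <= n -> #|D k| = k.
  move=> k kn; apply/eqP; rewrite eqn_leq; apply/andP; split.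
    have h1 : k + (n - k) <= n by lia.
    have := grow (n - k) k h1.
    rewrite subnKC // Dn cardsT card_ord; lia.
  by have := grow k 0 kn; rewrite D0 cards0.
pose f := [ffun j : 'I_n => odflt j [pick x in D j.+1 :\: D j]].
have Df : forall k, k <= n -> D k = f @: lowset n k.
  elim=> [|k IH] kn.
    rewrite D0; apply/setP => x; rewrite inE; apply/esym/imsetP => [[j]].
    by rewrite inE.
  have kn' : k < n by [].
  have sub : D k \subset D k.+1 by apply: proper_sub; apply: Ds.
  have : #|D k.+1 :\: D k| == 1.
    rewrite cardsD (setIidPr sub) !cardD //; try lia.
  case/cards1P => x Dx.
  have fk : f (Ordinal kn') = x.
    by rewrite ffunE /=; case: pickP => [y|/(_ x)]; rewrite Dx inE ?eqxx // => /eqP.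
  have xk : x \in D k.+1.
    have : x \in D k.+1 :\: D k by rewrite Dx inE.
    by rewrite inE => /andP[].
  apply/setP => y; apply/idP/imsetP.
  - move=> yD; case: (boolP (y \in D k)) => yk.
      have kn2 : k <= n by apply: ltnW.
      rewrite (IH kn2) in yk; case/imsetP: yk => j; rewrite inE => jk ->.
      by exists j => //; rewrite inE; apply: ltnW.
    have : y \in D k.+1 :\: D k by rewrite inE yk.
    rewrite Dx inE => /eqP ->; exists (Ordinal kn'); first by rewrite inE /=.
    by rewrite fk.
  - case=> j; rewrite inE ltnS leq_eqVlt => /orP [/eqP jk|jk] ->.
      have -> : j = Ordinal kn' by apply: val_inj.
      by rewrite fk.
    have kn2 : k <= n by apply: ltnW.
    have : f j \in D k by rewrite (IH kn2); apply: imset_f; rewrite inE.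
    by move/(subsetP sub).
have finj : injective f.
  have lT : lowset n n = setT by apply/setP => j; rewrite !inE ltn_ord.
  have : #|f @: lowset n n| == #|lowset n n|.
    by rewrite -Df // Dn lT.
  move/imset_injP => H a b; apply: H; by rewrite lT inE.
exists f; split => //.
apply: eq_imset => k; have kn : k <= n by rewrite -ltnS.
by rewrite -(Df k kn) /D inord_val.
Qed.



Definition Aset n (G : {set 'I_n}) : {set {ffun 'I_n -> 'I_n}} :=
  [set f : {ffun 'I_n -> 'I_n} | injectiveb f && (f @: lowset n #|G| == G)].
Definition psi n (f : {ffun 'I_n -> 'I_n}) : chainT n :=
  [set f @: lowset n k | k : 'I_n.+1].
Definition cnt n (F : {set 'I_n}) :=
  #|[set chi : chainT n | full_chain chi && (F \in chi)]|.

Lemma cnt_le_A n (F : {set 'I_n}) : cnt F <= #|Aset F|.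
Proof.
apply: leq_trans (leq_imset_card (@psi n) (Aset F)).
apply: subset_leq_card; apply/subsetP => chi; rewrite inE => /andP[fc Fc].
have [f [finj chiE]] := full_chain_struct fc.
rewrite chiE in Fc.
case/imsetP: Fc => k _ Fk.
apply/imsetP; exists f => //.
rewrite inE; apply/andP; split; first by apply/injectiveP.
have kn : k <= n by rewrite -ltnS.
have -> : #|F| = k by rewrite Fk (card_imset _ finj) card_lowset.
by rewrite Fk.
Qed.

Lemma full_chain_sizes n (chi : chainT n) (F G : {set 'I_n}) :
  full_chain chi -> F \in chi -> G \in chi -> #|F| = #|G| -> F = G.
Proof.
move=> fc; have [f [finj ->]] := full_chain_struct fc.
case/imsetP => a _ ->; case/imsetP => b _ ->.
have an : a <= n by rewrite -ltnS.
have bn : b <= n by rewrite -ltnS.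
rewrite !(card_imset _ finj) !card_lowset // => ab.
by have -> : a = b by apply: val_inj.
Qed.

Lemma exists_perm n (F G : {set 'I_n}) : #|F| = #|G| ->
  exists2 p : 'I_n -> 'I_n, injective p & p @: F = G.
Proof.
move=> FG.
have FGc : #|~: F| = #|~: G|.
  by have := cardsC F; have := cardsC G; lia.
pose p x := if x \in F then nth x (enum G) (index x (enum F))
            else nth x (enum (~: G)) (index x (enum (~: F))).
have pF : forall x, x \in F -> p x \in G.
  move=> x xF; rewrite /p xF -mem_enum; apply: mem_nth.
  by rewrite -cardE -FG cardE index_mem mem_enum.
have pC : forall x, x \notin F -> p x \in ~: G.
  move=> x xF; rewrite /p (negbTE xF) -mem_enum; apply: mem_nth.
  by rewrite -cardE -FGc cardE index_mem mem_enum inE.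
have key : forall (A B : {set 'I_n}) x y, #|A| = #|B| -> x \in A -> y \in A ->
    nth x (enum B) (index x (enum A)) = nth y (enum B) (index y (enum A)) -> x = y.
  move=> A B x y AB xA yA.
  have ix : index x (enum A) < size (enum B) by rewrite -cardE -AB cardE index_mem mem_enum.
  have iy : index y (enum A) < size (enum B) by rewrite -cardE -AB cardE index_mem mem_enum.
  rewrite (@set_nth_default _ (enum B) x y _ iy) => /eqP.
  rewrite nth_uniq ?enum_uniq // => /eqP ixy.
  have ex : nth x (enum A) (index x (enum A)) = x by rewrite nth_index ?mem_enum.
  have ey : nth x (enum A) (index y (enum A)) = y.
    by rewrite (set_nth_default y) ?nth_index ?mem_enum // index_mem mem_enum.
  by rewrite -ex ixy ey.
have pinj : injective p.
  move=> x y.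
  case xF: (x \in F); case yF: (y \in F).
  - by rewrite /p xF yF; apply: key.
  - have := pF x xF; have := pC y (negbT yF).
    by move=> h1 h2 pxy; rewrite -pxy inE h2 in h1.
  - have := pF y yF; have := pC x (negbT xF).
    by move=> h1 h2 pxy; rewrite pxy inE h2 in h1.
  - rewrite /p xF yF; apply: key => //; by rewrite inE ?xF ?yF.
exists p => //.
apply/eqP; rewrite eqEcard (card_imset _ pinj) FG leqnn andbT.
by apply/subsetP => y /imsetP [x xF ->]; apply: pF.
Qed.

Lemma A_sym n (F G : {set 'I_n}) : #|F| = #|G| -> #|Aset F| <= #|Aset G|.
Proof.
move=> FG; have [p pinj pFG] := exists_perm FG.
pose c (f : {ffun 'I_n -> 'I_n}) := [ffun x => p (f x)].
have cinj : injective c.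
  move=> f1 f2 /ffunP E; apply/ffunP => x; have := E x; rewrite !ffunE.
  exact: pinj.
rewrite -(card_imset _ cinj); apply: subset_leq_card.
apply/subsetP => g /imsetP [f]; rewrite !inE => /andP[/injectiveP finj /eqP fF] ->.
apply/andP; split.
  by apply/injectiveP => a b; rewrite !ffunE => /pinj /finj.
have -> : c f @: lowset n #|G| = p @: (f @: lowset n #|F|).
  by rewrite -imset_comp FG; apply: eq_imset => x; rewrite ffunE.
by rewrite fF pFG.
Qed.

Lemma sumA n k : \sum_(G : {set 'I_n} | #|G| == k) #|Aset G| <= n`!.
Proof.
pose Inj := [set f : {ffun 'I_n -> 'I_n} | injectiveb f].
pose h (f : {ffun 'I_n -> 'I_n}) := f @: lowset n k.
have E : forall G : {set 'I_n}, #|G| == k -> #|Aset G| =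
    \sum_(f | ((f \in Inj) && (#|h f| == k)) && (h f == G)) 1.
  move=> G /eqP Gk; rewrite sum1dep_card; apply: eq_card => f.
  rewrite !inE /h Gk; case: eqP => [->|]; by rewrite ?Gk ?eqxx ?andbT ?andbF.
rewrite (eq_bigr _ E).
rewrite -(partition_big h (fun G => #|G| == k)); last by move=> f /andP[].
rewrite sum1dep_card.
have : #|Inj| = n`! by rewrite card_inj_ffuns card_ord ffactnn.
move=> <-; apply: subset_leq_card; apply/subsetP => f. by rewrite inE => /andP[].
Qed.

Lemma cnt_bound n (F : {set 'I_n}) : cnt F * 'C(n, #|F|) <= n`!.
Proof.
have : \sum_(G : {set 'I_n} | #|G| == #|F|) cnt F <= n`!.
  apply: leq_trans (sumA n #|F|); apply: leq_sum => G /eqP HG.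
  exact: leq_trans (cnt_le_A F) (A_sym (esym HG)).
rewrite sum_nat_cond_const mulnC.
have -> : #|[set G : {set 'I_n} | #|G| == #|F|]| = 'C(n, #|F|).
  rewrite -[n in 'C(n, _)](card_ord n) -cardsT -cards_draws.
  by apply: eq_card => G; rewrite !inE subsetT.
by [].
Qed.



Definition DS n (Q : {set {set 'I_n}}) :=
  forall A B, A \in Q -> B \in Q -> #|A| = #|B| -> A = B.

Lemma ith_key n (Q : {set {set 'I_n}}) i : DS Q -> 1 <= i <= #|Q| ->
  ith_member Q i \in Q /\
  #|[set H in Q | #|ith_member Q i| < #|H|]| = i.-1.
Proof.
move=> dsQ /andP[i1 iQ].
rewrite /ith_member.
set s := as_chain Q.
have ss : size s = #|Q| by rewrite /s /as_chain size_sort cardE.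
have ms : s =i Q by move=> x; rewrite /s /as_chain mem_sort mem_enum.
have us : uniq s by rewrite /s /as_chain sort_uniq enum_uniq.
pose r := fun A B : {set 'I_n} => #|B| <= #|A|.
have so : sorted r s.
  by apply: sort_sorted => A B; rewrite /r; apply: leq_total.
have tr : transitive r by move=> y x z; rewrite /r => h1 h2; apply: leq_trans h2 h1.
have rf : reflexive r by move=> x; rewrite /r.
have hom := sorted_leq_nth tr rf set0 so.
have kl : i.-1 < size s by rewrite ss; lia.
set G := nth set0 s i.-1.
have GQ : G \in Q by rewrite -ms mem_nth.
split => //.
have -> : [set H in Q | #|G| < #|H|] =
    [set nth set0 s (widen_ord (leq_pred i) j) | j : 'I_i.-1].
  apply/setP => H; rewrite inE; apply/idP/imsetP.
  - case/andP => HQ GH.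
    have Hs : H \in s by rewrite ms.
    have jl : index H s < size s by rewrite index_mem.
    case: (ltnP (index H s) i.-1) => ji.
      exists (Ordinal ji) => //=; by rewrite nth_index.
    have := hom i.-1 (index H s) kl jl ji.
    by rewrite /r nth_index // -/G leqNgt GH.
  - case=> j _ ->; rewrite /= -ms mem_nth /=; last first.
      by apply: leq_trans (ltn_ord j) _; apply: ltnW.
    have jl : j < size s by apply: leq_trans (ltn_ord j) _; apply: ltnW.
    have := hom j i.-1 jl kl (ltnW (ltn_ord j)); rewrite /r -/G.
    rewrite leq_eqVlt => /orP [/eqP E|//].
    have E2 := dsQ _ _ GQ (_ : nth set0 s j \in Q) E.
    have : nth set0 s j \in Q by rewrite -ms mem_nth.
    move/E2 => /eqP; rewrite nth_uniq // => /eqP ji.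
    by have := ltn_ord j; rewrite -ji ltnn.
rewrite card_imset ?card_ord //.
move=> a b /eqP; rewrite nth_uniq //=.
- by move=> /eqP ab; apply: val_inj.
- by apply: leq_trans (ltn_ord a) _; apply: ltnW.
- by apply: leq_trans (ltn_ord b) _; apply: ltnW.
Qed.



Lemma few_lt n (S : {set {set 'I_n}}) (w : {set 'I_n} -> nat) m :
  {in S &, injective w} ->
  #|[set F in S | #|[set G in S | w F < w G]| < m]| <= m.
Proof.
move=> winj; set X := [set F in S | _].
case: (set_0Vmem X) => [->|[x0 x0X]]; first by rewrite cards0.
case: (@arg_minnP _ x0 (mem X) w x0X) => F FX0 Fmin.
have FX : F \in X := FX0.
rewrite (cardsD1 F) FX.
have := FX; rewrite inE => /andP[FS Fm].
suff : #|X :\ F| <= #|[set G in S | w F < w G]| by move: Fm; simpl; lia.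
apply: subset_leq_card; apply/subsetP => G; rewrite in_setD1 => /andP[GF GX].
have := GX; rewrite /X inE => /andP[GS _].
rewrite inE GS /= ltn_neqAle.
have -> : w F <= w G by apply: Fmin.
rewrite andbT; apply/eqP => E; move: GF; by rewrite (winj _ _ FS GS E) eqxx.
Qed.

Lemma exists_sub (T : finType) (A : {set T}) k : k <= #|A| ->
  exists2 B : {set T}, B \subset A & #|B| = k.
Proof.
rewrite -bin_gt0 -cards_draws => /card_gt0P [B]; rewrite inE => /andP[BA /eqP Bk].
by exists B.
Qed.

Lemma bigger_lt n (Q : {set {set 'I_n}}) (F G : {set 'I_n}) : F \in Q -> #|G| < #|F| ->
  #|[set H in Q | #|F| < #|H|]| < #|[set H in Q | #|G| < #|H|]|.
Proof.
move=> FQ GF; apply: proper_card; apply/properP; split.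
  apply/subsetP => H; rewrite !inE => /andP[-> /= FH]; exact: ltn_trans GF FH.
by exists F; rewrite !inE ?FQ ?GF // ltnn.
Qed.

Lemma bigger_inj n (Q : {set {set 'I_n}}) (F G : {set 'I_n}) : DS Q -> F \in Q -> G \in Q ->
  #|[set H in Q | #|F| < #|H|]| = #|[set H in Q | #|G| < #|H|]| -> F = G.
Proof.
move=> ds FQ GQ E.
case: (ltngtP #|F| #|G|) => FG.
- by have := bigger_lt GQ FG; rewrite E ltnn.
- by have := bigger_lt FQ FG; rewrite E ltnn.
- exact: ds.
Qed.



Lemma Lchi_bound n (Fam : {set {set 'I_n}}) (T : {set (chainT n * {set 'I_n})})
  q i (chi : chainT n) :
  marked_family Fam T -> full_chain chi -> 1 <= i <= q -> q <= #|Tsec T chi| ->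
  #|Tsec T chi| <= q * #|Lchi Fam (power T q) i chi|.
Proof.
move=> mT fc /andP[i1 iq] qt.
set S := Tsec T chi.
have inS : forall F, F \in S -> (F \in Fam) && (F \in chi).
  by move=> F; rewrite inE => /mT [_ /= -> ->].
have dsS : DS S.
  move=> A B /inS/andP[_ Ac] /inS/andP[_ Bc]; exact: full_chain_sizes fc Ac Bc.
pose big := fun F : {set 'I_n} => [set G in S | #|F| < #|G|].
pose sml := fun F : {set 'I_n} => [set G in S | #|G| < #|F|].
pose Good := [set F in S | (i.-1 <= #|big F|) && (q - i <= #|sml F|)].
have GoodL : Good \subset Lchi Fam (power T q) i chi.
  apply/subsetP => F; rewrite inE => /andP[FS /andP[hb hs]].
  have [B Bb Bc] := exists_sub hb.
  have [Sm Ss Sc] := exists_sub hs.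
  pose Q := B :|: [set F] :|: Sm.
  have QS : Q \subset S.
    apply/subsetP => H; rewrite /Q !in_setU in_set1 => /orP[/orP[HB|/eqP ->]|HS] //.
      by have := subsetP Bb H HB; rewrite inE => /andP[].
    by have := subsetP Ss H HS; rewrite inE => /andP[].
  have Bbig : forall H, H \in B -> #|F| < #|H|.
    by move=> H HB; have := subsetP Bb H HB; rewrite inE => /andP[].
  have Ssml : forall H, H \in Sm -> #|H| < #|F|.
    by move=> H HS; have := subsetP Ss H HS; rewrite inE => /andP[].
  have FB : F \notin B by apply/negP => /Bbig; rewrite ltnn.
  have c1 : #|B :|: [set F]| = i.-1 + 1.
    by rewrite setUC cardsU1 FB Bc addnC.
  have c0 : (B :|: [set F]) :&: Sm = set0.
    apply/setP => H; rewrite !inE; apply/negP => /andP[/orP[HB|/eqP HF] HS].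
      by have := Bbig H HB; have := Ssml H HS; lia.
    by have := Ssml H HS; rewrite HF ltnn.
  have cQ : #|Q| = q by rewrite /Q cardsU c0 cards0 c1 Sc; lia.
  have dsQ : DS Q.
    by move=> A1 A2 h1 h2; apply: dsS; [apply: (subsetP QS) | apply: (subsetP QS)].
  have iQ : 1 <= i <= #|Q| by rewrite cQ i1 iq.
  have [GQ Gb] := ith_key dsQ iQ.
  have FQ : F \in Q by rewrite !inE eqxx orbT.
  have Fb : #|[set H in Q | #|F| < #|H|]| = i.-1.
    rewrite -Bc; apply: eq_card => H; rewrite !inE.
    apply/idP/idP.
      case/andP => /orP[/orP[->|/eqP ->]|HS] // FH.
        by rewrite ltnn in FH.
      by have := Ssml H HS; lia.
    by move=> HB; rewrite HB /= Bbig.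
  have GF : ith_member Q i = F by apply: bigger_inj dsQ GQ FQ _; rewrite Gb Fb.
  rewrite inE; have /andP[-> _] := inS F FS; rewrite /=.
  apply/existsP; exists Q; rewrite GF eqxx andbT inE /= cQ eqxx andbT.
  exact: QS.
have cX : #|[set F in S | #|big F| < i.-1]| <= i.-1.
  apply: few_lt => A1 A2 h1 h2; exact: dsS.
have maxc : forall A : {set 'I_n}, #|A| <= n.
  by move=> A; have := max_card A; rewrite card_ord.
have cY : #|[set F in S | #|sml F| < q - i]| <= q - i.
  have -> : [set F in S | #|sml F| < q - i] =
      [set F in S | #|[set G in S | n - #|F| < n - #|G|]| < q - i].
    apply/setP => F; rewrite !inE; congr (_ && (_ < _)); apply: eq_card => G.
    rewrite !inE; congr (_ && _); have := maxc F; have := maxc G; lia.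
  apply: few_lt => A1 A2 h1 h2 E; apply: dsS => //.
  by have := maxc A1; have := maxc A2; lia.
have cS : #|S| <= #|Good| + i.-1 + (q - i).
  have sub : S \subset Good :|: [set F in S | #|big F| < i.-1]
                        :|: [set F in S | #|sml F| < q - i].
    apply/subsetP => F FS; rewrite !in_setU !in_set; rewrite inE in FS; rewrite FS /=.
    case: (leqP i.-1 #|big F|) => h1; case: (leqP (q - i) #|sml F|) => h2 //=.
  apply: leq_trans (subset_leq_card sub) _.
  rewrite cardsU; apply: leq_trans (leq_subr _ _) _.
  rewrite cardsU.
  have := leq_subr #|Good :&: [set F in S | #|big F| < i.-1]|
            (#|Good| + #|[set F in S | #|big F| < i.-1]|).
  lia.
have := subset_leq_card GoodL.
move: cS qt; set t := #|S|; set L := #|Lchi _ _ _ _|; set g := #|Good|.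
move=> cS qt gL.
have h : t + 1 <= L + q by lia.
nia.
Qed.



Lemma card_fst (A B : finType) (S : {set A * B}) :
  #|S| = \sum_a #|[set b | (a, b) \in S]|.
Proof.
symmetry.
rewrite (eq_bigr (fun a => \sum_b (((a, b) \in S) : nat))); last first.
  move=> a _; rewrite -sum1_card big_mkcond /=.
  by apply: eq_bigr => b _; rewrite inE; case: ((a, b) \in S).
rewrite pair_big /= -sum1_card [RHS]big_mkcond /=.
by apply: eq_bigr => [[a b]] _ /=; case: ((a, b) \in S).
Qed.

Lemma card_snd (A B : finType) (S : {set A * B}) :
  #|S| = \sum_b #|[set a | (a, b) \in S]|.
Proof.
symmetry.
rewrite (eq_bigr (fun b => \sum_a (((a, b) \in S) : nat))); last first.
  move=> b _; rewrite -sum1_card big_mkcond /=.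
  by apply: eq_bigr => a _; rewrite inE; case: ((a, b) \in S).
rewrite exchange_big pair_big /= -sum1_card [RHS]big_mkcond /=.
by apply: eq_bigr => [[a b]] _ /=; case: ((a, b) \in S).
Qed.

Lemma main_nat n q (Fam : {set {set 'I_n}}) (T : {set (chainT n * {set 'I_n})}) i m :
  0 < q -> marked_family Fam T -> q_strong q T -> 1 <= i <= q ->
  (forall F, F \in Fam -> m <= 'C(n, #|F|)) ->
  #|T| * m <= q * #|Lall Fam (power T q) i| * n`!.
Proof.
move=> q0 mT qs iq mF.
set M := power T q; set L := Lall Fam M i.
pose W := [set p : chainT n * {set 'I_n} | full_chain p.1 && (p.2 \in Lchi Fam M i p.1)].
have LchiP : forall chi F, F \in Lchi Fam M i chi -> (F \in Fam) && ((chi, F) \in T).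
  move=> chi F; rewrite inE => /andP[-> /existsP [Q /andP[QM /eqP <-]]] /=.
  move: QM; rewrite inE /= => /andP[/subsetP QT /eqP Qq].
  have : ith_member Q i \in as_chain Q.
    apply: mem_nth.
    by rewrite /as_chain size_sort -cardE Qq; case/andP: iq => i1 iq; lia.
  rewrite /as_chain mem_sort mem_enum.
  by move/QT; rewrite inE.
have LFam : forall F, F \in L -> F \in Fam.
  by move=> F /bigcupP [chi _ /LchiP /andP[]].
have s1 : #|T| <= q * #|W|.
  rewrite (card_fst T) (card_fst W) big_distrr /=; apply: leq_sum => chi _.
  case: (set_0Vmem (Tsec T chi)) => [E|[F FT]].
    by rewrite /Tsec in E; rewrite E cards0.
  have fc : full_chain chi by have := FT; rewrite inE => /mT [].
  have qt : q <= #|Tsec T chi| by apply: qs; apply/set0Pn; exists F.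
  have -> : [set b | (chi, b) \in W] = Lchi Fam M i chi.
    by apply/setP => G; rewrite !inE /= fc.
  exact: Lchi_bound mT fc iq qt.
have s2 : #|W| <= \sum_(F in L) cnt F.
  pose W' := [set p : chainT n * {set 'I_n} |
                (p.2 \in L) && full_chain p.1 && (p.2 \in p.1)].
  have sub : W \subset W'.
    apply/subsetP => [[chi F]] HW.
    have /andP[fc FL] : full_chain chi && (F \in Lchi Fam M i chi) by move: HW; rewrite in_set.
    rewrite in_set /= fc andbT; apply/andP; split.
      by apply/bigcupP; exists chi.
    by have /andP[_ /mT [_ _ /=]] := LchiP _ _ FL.
  apply: leq_trans (subset_leq_card sub) _.
  rewrite (card_snd W') [in X in _ <= X]big_mkcond /=; apply: leq_sum => F _.
  case: ifP => FL.
    by apply: subset_leq_card; apply/subsetP => chi; rewrite !inE /= FL.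
  rewrite leqn0 cards_eq0; apply/eqP/setP => chi; by rewrite !inE /= FL.
have s3 : (\sum_(F in L) cnt F) * m <= #|L| * n`!.
  rewrite big_distrl /= -sum_nat_const; apply: leq_sum => F FL.
  apply: leq_trans (cnt_bound F); apply: leq_mul => //; exact: mF (LFam F FL).
have := leq_mul (leq_trans s1 (leq_mul (leqnn q) s2)) (leqnn m).
move=> h; apply: leq_trans h _.
by rewrite -!mulnA leq_mul2l s3 orbT.
Qed.

Local Open Scope ring_scope.

Theorem lemma4p3 (R : realFieldType) (n q : nat) (eps : R)
  (Fam : {set {set 'I_n}}) (T : {set (chainT n * {set 'I_n})}) :
  (0 < q)%N -> 0 < eps ->
  marked_family Fam T -> q_strong q T ->
  eps * (n`!)%:R <= (#|T|)%:R ->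
  forall i : nat, (1 <= i <= q)%N ->
  forall F0 : {set 'I_n}, F0 \in Fam ->
  (forall F, F \in Fam -> ('C(n, #|F0|) <= 'C(n, #|F|))%N) ->
  (#|Lall Fam (power T q) i|)%:R >= eps / q%:R * ('C(n, #|F0|))%:R.
Proof.
move=> q0 e0 mT qs hT i iq F0 F0F mF.
have key := main_nat q0 mT qs iq mF.
set L := #|Lall Fam (power T q) i| in key *.
set m := 'C(n, #|F0|) in key *.
have nf : (0 : R) < (n`!)%:R by rewrite ltr0n fact_gt0.
have qp : (0 : R) < q%:R by rewrite ltr0n.
have h1 : eps * (n`!)%:R * m%:R <= (q * L * n`!)%:R.
  apply: le_trans (_ : (#|T| * m)%:R <= _); last by rewrite ler_nat.
  by rewrite natrM ler_wpM2r // ler0n.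
rewrite !natrM in h1.
have h2 : eps * m%:R <= q%:R * L%:R.
  by rewrite -(ler_pM2r nf) mulrAC.
rewrite mulrAC ler_pdivrMr // mulrC.
by rewrite mulrC [L%:R * _]mulrC.
Qed.
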